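(* (i) $(\mathcal{T}_2,=)\models\exists\mathsf{x}[\neg D(\mathsf{x})\wedge\forall\mathsf{y}[AP(\mathsf{x},\mathsf{y})\rightarrow D(\mathsf{y})]]$. (ii) For every $\beta$ with $Spr(\beta)$, if $(\mathcal{F}_\beta,=)\models\exists\mathsf{x}[\neg D(\mathsf{x})\wedge\forall\mathsf{y}[AP(\mathsf{x},\mathsf{y})\rightarrow D(\mathsf{y})]]$, then $\mathcal{F}_\beta$ embeds into $\mathcal{T}_2$.
   Context: Intuitionistic mathematics (constructive reading of logical constants; Markov's Principle not assumed). Axioms assumed: Brouwer's Continuity Principle (for every $R\subseteq\mathcal{N}\times\omega$, if $\forall\alpha\exists n[\alpha Rn]$ then $\forall\alpha\exists m\exists n\forall\beta[\overline{\alpha}m\sqsubset\beta\rightarrow\beta Rn]$); the First Axiom of Continuous Choice (for every $R\subseteq\mathcal{N}\times\omega$, if $\forall\alpha\exists n[\alpha Rn]$ then there is $\varphi:\mathcal{N}\rightarrow\omega$ in the sense below with $\forall\alpha[\alpha R\varphi(\alpha)]$); and the Second Axiom of Countable Choice (for every $R\subseteq\mathbb{N}\times\mathcal{N}$, if $\forall n\exists\alpha[nR\alpha]$ then $\exists\alpha\forall n[nR\alpha^n]$). Notation: $\mathcal{N}=\omega^\omega$; finite sequences coded by naturals; $\overline{\alpha}p=\langle\alpha(0),\dots,\alpha(p-1)\rangle$; $J$ a fixed pairing bijection $\omega\times\omega\to\omega$ and $\alpha^n(m):=\alpha(J(n,m))$. $\mathcal{F}_\beta:=\{\alpha\mid\forall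 n[\beta(\overline{\alpha}n)=0]\}$; $Spr(\beta)$ iff $\forall s[\beta(s)=0\leftrightarrow\exists n[\beta(s\ast\langle n\rangle)=0]]$. $\mathcal{T}_2:=\{\alpha\mid\forall i[\alpha(i)\le\alpha(i+1)<2]\}$. Formulas: $D(\mathsf{x}):=\forall\mathsf{y}[\mathsf{x}=\mathsf{y}\vee\neg(\mathsf{x}=\mathsf{y})]$, $AP(\mathsf{x},\mathsf{y}):=\forall\mathsf{z}[\neg(\mathsf{z}=\mathsf{x})\vee\neg(\mathsf{z}=\mathsf{y})]$; satisfaction read intuitionistically with $=$ interpreted as equality of sequences. For $\varphi\in\mathcal{N}$: $\varphi:\mathcal{F}_\beta\rightarrow\omega$ iff $\forall\alpha\in\mathcal{F}_\beta\exists p[\varphi(\overline{\alpha}p)\neq0]$, with $\varphi(\alpha):=\varphi(\overline{\alpha}q)-1$ for the least such $q$; $\varphi:\mathcal{F}_\beta\rightarrow\mathcal{N}$ iff $\forall n[\varphi^n:\mathcal{F}_\beta\rightarrow\omega]$, and then $\varphi|\alpha$ is the sequence $n\mapsto\varphi^n(\alpha)$; $\varphi$ is injective iff $\forall\alpha,\delta\in\mathcal{F}_\beta[\alpha\#\delta\rightarrow\varphi|\alpha\#\varphi|\delta]$, where $\alpha\#\delta$ means $\exists n[\alpha(n)\neq\delta(n)]$. $\mathcal{F}_\beta$ embeds into $X\subseteq\mathcal{N}$ iff there is an injective $\varphi:\mathcal{F}_\beta\rightarrow\mathcal{N}$ with $\varphi|\alpha\in X$ for all $\alpha\in\mathcal{F}_\beta$.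 *)

(* Defs.v *)
From Stdlib Require Import List Arith.
Import ListNotations.

Definition baire := nat -> nat.

(* Finite sequences are represented directly as lists of naturals
   (instead of via a numerical coding). *)
Fixpoint prefix (a : baire) (n : nat) : list nat :=
  match n with
  | 0 => []
  | S k => prefix a k ++ [a k]
  end.

Definition initseg (s : list nat) (b : baire) : Prop :=
  prefix b (length s) = s.

Definition J (n m : nat) : nat := (n + m) * (n + m + 1) / 2 + m.

Definition sub (a : baire) (n : nat) : baire := fun m => a (J n m).

Definition seq_eq (a b : baire) : Prop := forall n, a n = b n.
Definition apart (a b : baire) : Prop := exists n, a n <> b n.

Definition inF (beta : list nat -> nat) (a : baire) : Prop :=
  forall n, beta (prefix a n) = 0.
Definition Spr (beta : list nat -> nat) : Prop :=
  forall s, beta s = 0 <-> exists n, beta (s ++ [n]) = 0.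
Definition inT2 (a : baire) : Prop :=
  forall i, a i <= a (S i) /\ a (S i) < 2.

Definition Dx (X : baire -> Prop) (x : baire) : Prop :=
  forall y, X y -> seq_eq x y \/ ~ seq_eq x y.
Definition APx (X : baire -> Prop) (x y : baire) : Prop :=
  forall z, X z -> ~ seq_eq z x \/ ~ seq_eq z y.
Definition models_sentence (X : baire -> Prop) : Prop :=
  exists x, X x /\ ~ Dx X x /\ (forall y, X y -> APx X x y -> Dx X y).

Definition fval (phi : list nat -> nat) (a : baire) (k : nat) : Prop :=
  exists q, phi (prefix a q) <> 0 /\
            (forall q', q' < q -> phi (prefix a q') = 0) /\
            k = phi (prefix a q) - 1.

Definition is_fun_to_nat (beta : list nat -> nat) (phi : list nat -> nat) : Prop :=
  forall a, inF beta a -> exists p, phi (prefix a p) <> 0.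

(* phi : F_beta -> N, with phi n playing the role of phi^n *)
Definition is_fun_to_baire (beta : list nat -> nat) (phi : nat -> list nat -> nat) : Prop :=
  forall n, is_fun_to_nat beta (phi n).

Definition restr_is (phi : nat -> list nat -> nat) (a g : baire) : Prop :=
  forall n, fval (phi n) a (g n).

Definition embeds (beta : list nat -> nat) (X : baire -> Prop) : Prop :=
  exists phi : nat -> list nat -> nat,
    is_fun_to_baire beta phi /\
    (forall a d g h, inF beta a -> inF beta d ->
       restr_is phi a g -> restr_is phi d h -> apart a d -> apart g h) /\
    (forall a, inF beta a -> exists g, restr_is phi a g /\ X g).

Definition BCP : Prop :=
  forall R : baire -> nat -> Prop,
    (forall a, exists n, R a n) ->
    forall a, exists m n, forall b, initseg (prefix a m) b -> R b n.

Definition AC10 : Prop :=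
  forall R : baire -> nat -> Prop,
    (forall a, exists n, R a n) ->
    exists phi : list nat -> nat,
      is_fun_to_nat (fun _ => 0) phi /\
      (forall a k, fval phi a k -> R a k).

Definition AC01 : Prop :=
  forall R : nat -> baire -> Prop,
    (forall n, exists a, R n a) -> exists a, forall n, R n (sub a n).

(* Main.v *)
Require Import Defs.
From Stdlib Require Import List Arith Lia Bool Cantor ConstructiveEpsilon.
Import ListNotations.

Lemma prefix_length a n : length (prefix a n) = n.
Proof. induction n; simpl; auto. rewrite length_app, IHn; simpl; lia. Qed.

Lemma prefix_nth a n i d : i < n -> nth i (prefix a n) d = a i.
Proof.
  induction n; intros H; [lia|]. simpl.
  destruct (Nat.eq_dec i n) as [->|Hn].
  - rewrite app_nth2; rewrite prefix_length; [|lia]. rewrite Nat.sub_diag; reflexivity.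
  - rewrite app_nth1; [apply IHn; lia| rewrite prefix_length; lia].
Qed.

Lemma prefix_ext a b n : (forall i, i < n -> a i = b i) -> prefix a n = prefix b n.
Proof.
  induction n; intros H; simpl; auto. rewrite IHn by (intros; apply H; lia). rewrite H by lia. auto.
Qed.

Lemma prefix_inv a b n : prefix a n = prefix b n -> forall i, i < n -> a i = b i.
Proof.
  intros H i Hi. rewrite <- (prefix_nth a n i 0 Hi), <- (prefix_nth b n i 0 Hi), H. auto.
Qed.

Lemma initseg_iff s b : initseg s b <-> prefix b (length s) = s.
Proof. reflexivity. Qed.

Definition exb (n : nat) (f : nat -> bool) := existsb f (seq 0 n).
Lemma exb_spec n f : exb n f = true <-> exists i, i < n /\ f i = true.
Proof.
  unfold exb. rewrite existsb_exists. split.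
  - intros [x [Hx Hf]]. apply in_seq in Hx. exists x; split; auto; lia.
  - intros [x [Hx Hf]]. exists x; split; auto. apply in_seq; lia.
Qed.
Lemma exb_ext n f g : (forall i, i < n -> f i = g i) -> exb n f = exb n g.
Proof.
  intros H. destruct (exb n g) eqn:E.
  - apply exb_spec in E as [i [Hi Hg]]. apply exb_spec. exists i. rewrite H; auto.
  - destruct (exb n f) eqn:E2; auto. apply exb_spec in E2 as [i [Hi Hg]].
    rewrite H in Hg by auto. assert (exb n g = true) by (apply exb_spec; eauto). congruence.
Qed.

Lemma T2_lt2 a : inT2 a -> forall i, a i < 2.
Proof. intros H [|i]; [destruct (H 0); lia| apply H]. Qed.
Lemma T2_mono a : inT2 a -> forall i j, i <= j -> a i <= a j.
Proof. intros H i j Hij. induction Hij; auto. specialize (H m). lia. Qed.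

Lemma bounded_dec (P : nat -> Prop) n : (forall i, P i \/ ~ P i) ->
  (forall i, i < n -> P i) \/ (exists i, i < n /\ ~ P i).
Proof.
  intros D. induction n.
  - left; intros; lia.
  - destruct IHn as [H|[i [Hi Hp]]].
    + destruct (D n). left; intros i Hi. destruct (Nat.eq_dec i n); subst; auto; apply H; lia.
      right; exists n; auto.
    + right; exists i; split; auto.
Qed.

Lemma least (P : nat -> Prop) : (forall i, P i \/ ~ P i) -> forall n, P n ->
  exists k, P k /\ forall j, j < k -> ~ P j.
Proof.
  intros D n Hn. induction n as [n IH] using lt_wf_ind.
  destruct (bounded_dec (fun i => ~ P i) n) as [H|[i [Hi Hp]]].
  - intros i; destruct (D i); auto.
  - exists n; auto.
  - apply (IH i Hi). destruct (D i); tauto.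
Qed.

Definition zero : baire := fun _ => 0.
Definition stepb (m : nat) : baire := fun i => if i <? m then 0 else 1.
Lemma stepb_init m : initseg (prefix zero m) (stepb m).
Proof.
  unfold initseg. rewrite prefix_length. apply prefix_ext. intros i Hi. unfold stepb, zero.
  apply Nat.ltb_lt in Hi; rewrite Hi; auto.
Qed.

Definition yof (a : baire) : baire := fun n => if exb (S n) (fun i => negb (a i =? 0)) then 1 else 0.
Lemma yof_T2 a : inT2 (yof a).
Proof.
  intros i; unfold yof. destruct (exb (S i) _) eqn:E1, (exb (S (S i)) _) eqn:E2; try lia.
  apply exb_spec in E1 as [j [Hj H]]. assert (exb (S (S i)) (fun i => negb (a i =? 0)) = true)
  by (apply exb_spec; exists j; split; auto; lia). congruence.
Qed.

Definition ok (a : baire) i := exb (S i) (fun j => negb (a j =? 0)) = false.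
Definition zof (y a : baire) : baire :=
  fun n => if exb (S n) (fun i => negb (exb (S i) (fun j => negb (a j =? 0))) && (y i =? 1)) then 1 else 0.
Lemma zof_T2 y a : inT2 (zof y a).
Proof.
  intros i; unfold zof. destruct (exb (S i) _) eqn:E1, (exb (S (S i)) _) eqn:E2; try lia.
  apply exb_spec in E1 as [j [Hj H]].
  assert (exb (S (S i)) (fun i => negb (exb (S i) (fun j => negb (a j =? 0))) && (y i =? 1)) = true)
  by (apply exb_spec; exists j; split; auto; lia). congruence.
Qed.
Lemma exb_zero n : exb n (fun j => negb (zero j =? 0)) = false.
Proof. destruct (exb n _) eqn:E; auto. apply exb_spec in E as [i [_ H]]. discriminate. Qed.

Lemma zof_zero y : inT2 y -> seq_eq (zof y zero) y.
Proof.
  intros Hy n. unfold zof. destruct (exb (S n) _) eqn:E.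
  - apply exb_spec in E as [i [Hi H]]. apply andb_true_iff in H as [_ H]. apply Nat.eqb_eq in H.
    pose proof (T2_mono y Hy i n ltac:(lia)). pose proof (T2_lt2 y Hy n). lia.
  - destruct (y n =? 1) eqn:E2. apply Nat.eqb_eq in E2.
    assert (exb (S n) (fun i => negb (exb (S i) (fun j => negb (zero j =? 0))) && (y i =? 1)) = true).
    { apply exb_spec. exists n. rewrite exb_zero, E2. auto. } congruence.
    apply Nat.eqb_neq in E2. pose proof (T2_lt2 y Hy n). lia.
Qed.

Lemma part1 : BCP -> models_sentence inT2.
Proof.
  intros bcp. exists zero. split; [intros i; unfold zero; lia|split].
  - intros D.
    set (R := fun a n => (n = 0 /\ seq_eq zero (yof a)) \/ (n = 1 /\ ~ seq_eq zero (yof a))).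
    assert (HR : forall a, exists n, R a n).
    { intros a. destruct (D (yof a) (yof_T2 a)); [exists 0|exists 1]; unfold R; auto. }
    destruct (bcp R HR zero) as [m [n Hm]].
    assert (Hz : seq_eq zero (yof zero)).
    { intros i. unfold yof. rewrite exb_zero. auto. }
    destruct (Hm zero) as [[-> _]|[-> H]].
    + unfold initseg. rewrite prefix_length; auto.
    + destruct (Hm (stepb m) (stepb_init m)) as [[_ H]|[? _]]; [|lia].
      specialize (H m). unfold yof, zero in H.
      destruct (exb (S m) _) eqn:E; try discriminate.
      assert (exb (S m) (fun i => negb (stepb m i =? 0)) = true).
      { apply exb_spec. exists m. unfold stepb. rewrite Nat.ltb_irrefl. auto. } congruence.
    + tauto.
  - intros y Hy Hap.
    set (R := fun a n => (n = 0 /\ ~ seq_eq (zof y a) zero) \/ (n = 1 /\ ~ seq_eq (zof y a) y)).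
    assert (HR : forall a, exists n, R a n).
    { intros a. destruct (Hap (zof y a) (zof_T2 y a)); [exists 0|exists 1]; unfold R; auto. }
    destruct (bcp R HR zero) as [m [n Hm]].
    assert (Hn : n = 0).
    { destruct (Hm zero) as [[-> _]|[-> H]]; auto.
      unfold initseg. rewrite prefix_length; auto. exfalso; apply H, zof_zero, Hy. }
    subst n.
    destruct (Hm (stepb m) (stepb_init m)) as [[_ Hne]|[? _]]; [|lia].
    destruct (exb m (fun i => y i =? 1)) eqn:Ey.
    + apply exb_spec in Ey as [i0 [Hi0 Hy0]]. apply Nat.eqb_eq in Hy0.
      intros w Hw.
      destruct (bounded_dec (fun i => y i = w i) (S i0)) as [Hall|[i [Hi Hne2]]].
      * intros i; destruct (Nat.eq_dec (y i) (w i)); auto.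
      * left. intros i. destruct (le_lt_dec i i0). apply Hall; lia.
        pose proof (T2_mono y Hy i0 i ltac:(lia)). pose proof (T2_lt2 y Hy i).
        pose proof (T2_mono w Hw i0 i ltac:(lia)). pose proof (T2_lt2 w Hw i).
        rewrite <- (Hall i0) in * by lia. lia.
      * right. intros He. apply Hne2, He.
    + exfalso. apply Hne. intros n. unfold zof, zero.
      destruct (exb (S n) _) eqn:E; auto. apply exb_spec in E as [i [Hi H]].
      apply andb_true_iff in H as [H1 H2]. apply negb_true_iff in H1.
      destruct (i <? m) eqn:Eim.
      * apply Nat.ltb_lt in Eim. assert (exb m (fun i => y i =? 1) = true) by (apply exb_spec; eauto).
        congruence.
      * apply Nat.ltb_ge in Eim. assert (exb (S i) (fun j => negb (stepb m j =? 0)) = true).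
        { apply exb_spec. exists m. unfold stepb. rewrite Nat.ltb_irrefl. split; auto; lia. }
        congruence.
Qed.

Section Retr.
Variable beta : list nat -> nat.
Variable HS : Spr beta.
Variable H0 : beta [] = 0.

Definition Bs := {l : list nat | beta l = 0}.

Definition next (s : Bs) (a : nat) : nat :=
  if Nat.eqb (beta (proj1_sig s ++ [a])) 0 then a else
  proj1_sig (constructive_indefinite_ground_description_nat
     (fun k => beta (proj1_sig s ++ [k]) = 0)
     (fun k => Nat.eq_dec _ 0) (proj1 (HS _) (proj2_sig s))).

Lemma next_ok s a : beta (proj1_sig s ++ [next s a]) = 0.
Proof.
  unfold next. destruct (Nat.eqb _ 0) eqn:E. apply Nat.eqb_eq; auto.
  destruct (constructive_indefinite_ground_description_nat _ _ _); auto.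
Qed.

Lemma next_keep s a : beta (proj1_sig s ++ [a]) = 0 -> next s a = a.
Proof. intros H. unfold next. rewrite H. reflexivity. Qed.

Fixpoint rr (a : baire) (n : nat) : Bs :=
  match n with
  | 0 => exist _ [] H0
  | S n => exist _ (proj1_sig (rr a n) ++ [next (rr a n) (a n)]) (next_ok (rr a n) (a n))
  end.

Definition rho (a : baire) : baire := fun n => next (rr a n) (a n).

Lemma rho_prefix a n : prefix (rho a) n = proj1_sig (rr a n).
Proof. induction n; simpl; auto. rewrite IHn. reflexivity. Qed.

Lemma rho_inF a : inF beta (rho a).
Proof. intros n. rewrite rho_prefix. apply proj2_sig. Qed.

Lemma rho_id a : inF beta a -> seq_eq (rho a) a.
Proof.
  intros Ha. assert (forall n, prefix (rho a) n = prefix a n).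
  { induction n; simpl; auto. rewrite IHn. f_equal. f_equal.
    unfold rho. apply next_keep. rewrite <- (rho_prefix a n), IHn. apply (Ha (S n)). }
  intros n. apply (prefix_inv _ _ (S n) (H (S n))). lia.
Qed.
End Retr.

Section Part2.
Variable beta : list nat -> nat.
Variable HS : Spr beta.
Variable x : baire.
Variable Hx : inF beta x.
Variable Hsent : forall y, inF beta y -> APx (inF beta) x y -> Dx (inF beta) y.
Variable bcp : BCP.

Definition rh := rho beta HS (Hx 0).
Definition iso (g : baire) m := forall w, inF beta w -> prefix w m = prefix g m -> seq_eq w g.

Definition R (a : baire) (k : nat) : Prop :=
  (prefix (rh (fun n => a (S n))) (a 0) = prefix x (a 0) /\ k = 0) \/
  (prefix (rh (fun n => a (S n))) (a 0) <> prefix x (a 0) /\ 0 < k /\ iso (rh (fun n => a (S n))) k).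

Lemma iso_mono g m m' : m <= m' -> iso g m -> iso g m'.
Proof.
  intros Hm H w Hw Hp. apply H; auto. apply prefix_ext. intros i Hi.
  apply (prefix_inv _ _ _ Hp). lia.
Qed.

Lemma iso_ext g g' m : seq_eq g g' -> iso g m -> iso g' m.
Proof.
  intros E H w Hw Hp. assert (Hwg : seq_eq w g).
  { apply H; auto. rewrite Hp. apply prefix_ext. intros; symmetry; apply E. }
  intros n; rewrite Hwg; apply E.
Qed.

Lemma iso_of_D g : inF beta g -> Dx (inF beta) g -> exists m, iso g m.
Proof.
  intros Hg D.
  set (R' := fun d j => (j = 0 /\ seq_eq g (rh d)) \/ (j = 1 /\ ~ seq_eq g (rh d))).
  assert (HR : forall d, exists j, R' d j).
  { intros d. destruct (D (rh d) (rho_inF _ _ _ d)); [exists 0|exists 1]; unfold R'; auto. }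
  destruct (bcp R' HR g) as [m [j Hm]].
  assert (Hgg : seq_eq g (rh g)) by (intros n; symmetry; apply rho_id; auto).
  assert (Hj : j = 0).
  { assert (Hi : initseg (prefix g m) g) by (unfold initseg; rewrite prefix_length; auto).
    destruct (Hm g Hi) as [[-> _]|[-> H]]; auto. tauto. }
  subst j. exists m. intros w Hw Hp.
  assert (Hi : initseg (prefix g m) w) by (unfold initseg; rewrite prefix_length; auto).
  destruct (Hm w Hi) as [[_ H]|[? _]]; [|lia].
  intros n. rewrite H. symmetry. apply (rho_id beta HS (Hx 0) w Hw).
Qed.

Lemma prefix_neq a b p : prefix a p <> prefix b p -> exists i, i < p /\ a i <> b i.
Proof.
  intros H. destruct (bounded_dec (fun i => a i = b i) p) as [A|A].
  - intros i; destruct (Nat.eq_dec (a i) (b i)); auto.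
  - exfalso; apply H, prefix_ext, A.
  - destruct A as [i [Hi Hn]]; eauto.
Qed.

Lemma R_total : forall a, exists k, R a k.
Proof.
  intros a. set (g := rh (fun n => a (S n))).
  destruct (list_eq_dec Nat.eq_dec (prefix g (a 0)) (prefix x (a 0))) as [E|E].
  - exists 0; left; auto.
  - destruct (prefix_neq _ _ _ E) as [i [_ Hi]].
    assert (Hg : inF beta g) by apply rho_inF.
    assert (Ap : APx (inF beta) x g).
    { intros z Hz. destruct (Nat.eq_dec (z i) (x i)).
      - right. intros He. apply Hi. rewrite <- He; auto.
      - left. intros He. apply n, He. }
    destruct (iso_of_D g Hg (Hsent g Hg Ap)) as [m Hm].
    exists (S m). right. split; auto. split; [lia|]. apply (iso_mono _ m); auto.
Qed.

Variable psi : list nat -> nat.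
Variable Hpsi1 : is_fun_to_nat (fun _ => 0) psi.
Variable Hpsi2 : forall a k, fval psi a k -> R a k.

Definition pc (p : nat) (a : baire) : baire := fun n => match n with 0 => p | S k => a k end.

Definition cert a p t m :=
  psi (prefix (pc p a) t) <> 0 /\ (forall t', t' < t -> psi (prefix (pc p a) t') = 0) /\
  m = psi (prefix (pc p a) t) - 1 /\ 0 < m.

Definition certb a p t m :=
  negb (psi (prefix (pc p a) t) =? 0) && negb (exb t (fun t' => negb (psi (prefix (pc p a) t') =? 0)))
  && (m =? psi (prefix (pc p a) t) - 1) && (0 <? m).

Lemma certb_spec a p t m : certb a p t m = true <-> cert a p t m.
Proof.
  unfold certb, cert. rewrite !andb_true_iff, !negb_true_iff, Nat.eqb_eq, Nat.ltb_lt, Nat.eqb_neq.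
  split.
  - intros [[[H1 H2] H3] H4]. repeat split; auto. intros t' Ht'.
    destruct (psi (prefix (pc p a) t') =? 0) eqn:E. apply Nat.eqb_eq; auto.
    assert (exb t (fun t' => negb (psi (prefix (pc p a) t') =? 0)) = true).
    { apply exb_spec. exists t'. rewrite E. auto. } congruence.
  - intros [H1 [H2 [H3 H4]]]. repeat split; auto.
    destruct (exb t _) eqn:E; auto. apply exb_spec in E as [t' [Ht H]].
    rewrite H2 in H by auto. discriminate.
Qed.

Fixpoint code (l : list nat) : nat :=
  match l with [] => 0 | a :: l => S (to_nat (a, code l)) end.

Lemma code_ge l : length l <= code l.
Proof. induction l; simpl; auto. pose proof (to_nat_non_decreasing a (code l)). lia. Qed.

Lemma to_nat_inj p q : to_nat p = to_nat q -> p = q.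
Proof. intros H. rewrite <- (cancel_of_to p), <- (cancel_of_to q), H. auto. Qed.

Lemma code_inj l l' : code l = code l' -> l = l'.
Proof.
  revert l'; induction l; destruct l'; intros H; try discriminate; auto.
  change (S (to_nat (a, code l)) = S (to_nat (n, code l'))) in H. apply eq_add_S in H as H'. apply to_nat_inj in H'. injection H'; intros. subst. f_equal. auto.
Qed.

Definition cost a p t m := to_nat (code (prefix a m), to_nat (p, t)).

Lemma cost_ge a p t m : p <= cost a p t m /\ t <= cost a p t m /\ m <= cost a p t m.
Proof.
  unfold cost. pose proof (to_nat_non_decreasing (code (prefix a m)) (to_nat (p, t))).
  pose proof (to_nat_non_decreasing p t). pose proof (code_ge (prefix a m)).
  rewrite prefix_length in H1. lia.
Qed.

Definition vb a n := exb (S n) (fun p => exb (S n) (fun t => exb (S n) (fun m =>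
   certb a p t m && (cost a p t m <=? n)))).

Lemma vb_spec a n : vb a n = true <-> exists p t m, cert a p t m /\ cost a p t m <= n.
Proof.
  unfold vb. split.
  - intros H. apply exb_spec in H as [p [_ H]]. apply exb_spec in H as [t [_ H]].
    apply exb_spec in H as [m [_ H]]. apply andb_true_iff in H as [H1 H2].
    apply certb_spec in H1. apply Nat.leb_le in H2. eauto.
  - intros [p [t [m [H1 H2]]]]. pose proof (cost_ge a p t m).
    apply exb_spec; exists p; split; [lia|]. apply exb_spec; exists t; split; [lia|].
    apply exb_spec; exists m; split; [lia|]. apply andb_true_iff; split.
    apply certb_spec; auto. apply Nat.leb_le; auto.
Qed.

Lemma vb_ext a b n : (forall i, i < n -> a i = b i) -> vb a n = vb b n.
Proof.
  intros H. unfold vb. apply exb_ext; intros p Hp. apply exb_ext; intros t Ht.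
  apply exb_ext; intros m Hm.
  assert (Hpc : forall t', t' <= t -> prefix (pc p a) t' = prefix (pc p b) t').
  { intros t' Ht'. apply prefix_ext. intros [|i] Hi; simpl; auto. apply H. lia. }
  assert (Hpm : prefix a m = prefix b m) by (apply prefix_ext; intros; apply H; lia).
  unfold certb, cost. rewrite Hpm, (Hpc t) by lia. f_equal. f_equal. f_equal. f_equal. f_equal.
  apply exb_ext. intros t' Ht'. rewrite Hpc by lia. auto.
Qed.

Definition ext (s : list nat) : baire := fun i => nth i s 0.
Definition phi (n : nat) (s : list nat) : nat :=
  if length s =? n then S (if vb (ext s) n then 1 else 0) else 0.
Definition gv a n := if vb a n then 1 else 0.

Lemma phi_at a n : phi n (prefix a n) = S (gv a n).
Proof.
  unfold phi, gv. rewrite prefix_length, Nat.eqb_refl. f_equal.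
  rewrite (vb_ext (ext (prefix a n)) a n); auto. intros i Hi. unfold ext. apply prefix_nth; auto.
Qed.

Lemma fval_phi a n k : fval (phi n) a k <-> k = gv a n.
Proof.
  split.
  - intros [q [H1 [H2 H3]]]. unfold phi at 1 in H1. rewrite prefix_length in H1.
    destruct (q =? n) eqn:E; [|tauto]. apply Nat.eqb_eq in E; subst q.
    rewrite H3, phi_at. lia.
  - intros ->. exists n. rewrite phi_at. split; [lia|split; [|lia]].
    intros q' Hq. unfold phi. rewrite prefix_length. destruct (q' =? n) eqn:E; auto.
    apply Nat.eqb_eq in E; lia.
Qed.

Lemma gv_T2 a : inT2 (gv a).
Proof.
  intros i. unfold gv. destruct (vb a i) eqn:E1, (vb a (S i)) eqn:E2; try lia.
  apply vb_spec in E1 as [p [t [m [H1 H2]]]].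
  assert (vb a (S i) = true) by (apply vb_spec; exists p, t, m; split; auto; lia). congruence.
Qed.

Lemma cert_iso a p t m : inF beta a -> cert a p t m -> iso a m.
Proof.
  intros Ha [H1 [H2 [H3 H4]]].
  assert (fval psi (pc p a) m) by (exists t; auto).
  destruct (Hpsi2 _ _ H) as [[_ ?]|[_ [_ Hi]]]; [lia|].
  apply (iso_ext (rh a)); auto. apply rho_id; auto.
Qed.

Lemma cert_exists a i : inF beta a -> a i <> x i -> exists p t m, cert a p t m.
Proof.
  intros Ha Hi. destruct (Hpsi1 (pc (S i) a) (fun _ => eq_refl)) as [t0 Ht0].
  destruct (least (fun t => psi (prefix (pc (S i) a) t) <> 0)) with t0 as [t [Ht Hl]]; auto.
  { intros t. destruct (Nat.eq_dec (psi (prefix (pc (S i) a) t)) 0); auto. }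
  assert (Hf : fval psi (pc (S i) a) (psi (prefix (pc (S i) a) t) - 1)).
  { exists t. split; auto. split; auto. intros t' Ht'. specialize (Hl t' Ht').
    destruct (Nat.eq_dec (psi (prefix (pc (S i) a) t')) 0); tauto. }
  destruct (Hpsi2 _ _ Hf) as [[E _]|[_ [Hk _]]].
  - exfalso. apply Hi. pose proof (prefix_inv _ _ (S i) E i ltac:(lia)).
    rewrite <- H. symmetry. apply (rho_id beta HS (Hx 0) a Ha).
  - exists (S i), t, (psi (prefix (pc (S i) a) t) - 1). split; auto. split; auto.
    intros t' Ht'. specialize (Hl t' Ht').
    destruct (Nat.eq_dec (psi (prefix (pc (S i) a) t')) 0); tauto.
Qed.

Lemma inj_main a d i : inF beta a -> inF beta d -> a i <> d i -> a i <> x i ->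
  exists n, gv a n <> gv d n.
Proof.
  intros Ha Hd Had Hax.
  destruct (cert_exists a i Ha Hax) as [p [t [m Hc]]].
  assert (Da : forall n, vb a n = true \/ ~ vb a n = true) by (intros n; destruct (vb a n); [left; reflexivity|right; discriminate]).
  assert (Va : vb a (cost a p t m) = true) by (apply vb_spec; eauto).
  destruct (least (fun n => vb a n = true) Da _ Va) as [K [HK HKl]].
  unfold gv. destruct (vb d K) eqn:EdK.
  2:{ exists K. rewrite HK, EdK. congruence. }
  assert (Dd : forall n, vb d n = false \/ ~ vb d n = false) by (intros n; destruct (vb d n); [right; discriminate|left; reflexivity]).
  destruct (bounded_dec (fun n => vb d n = false) K Dd) as [Hall|[n [Hn Hv]]].
  - exfalso.
    apply vb_spec in HK as [p1 [t1 [m1 [C1 L1]]]].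
    apply vb_spec in EdK as [p2 [t2 [m2 [C2 L2]]]].
    assert (E1 : cost a p1 t1 m1 = K).
    { destruct (Nat.eq_dec (cost a p1 t1 m1) K); auto. exfalso.
      apply (HKl (cost a p1 t1 m1)). lia. apply vb_spec; eauto. }
    assert (E2 : cost d p2 t2 m2 = K).
    { destruct (Nat.eq_dec (cost d p2 t2 m2) K); auto. exfalso.
      assert (vb d (cost d p2 t2 m2) = true) by (apply vb_spec; eauto).
      rewrite Hall in H by lia. discriminate. }
    rewrite <- E2 in E1. unfold cost in E1. apply to_nat_inj in E1. injection E1; intros _ Ec.
    apply code_inj in Ec.
    assert (m1 = m2) by (rewrite <- (prefix_length a m1), <- (prefix_length d m2), Ec; auto).
    subst m2. pose proof (cert_iso a p1 t1 m1 Ha C1 d Hd (eq_sym Ec)). apply Had. symmetry; auto.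
  - exists n. destruct (vb a n) eqn:E. exfalso; apply (HKl n Hn); auto.
    destruct (vb d n); auto.
Qed.

Lemma embeds_ok : embeds beta inT2.
Proof.
  exists phi. split; [|split].
  - intros n a _. exists n. rewrite phi_at. lia.
  - intros a d g h Ha Hd Hg Hh [i Hi].
    assert (Eg : forall n, g n = gv a n) by (intros n; apply fval_phi, Hg).
    assert (Eh : forall n, h n = gv d n) by (intros n; apply fval_phi, Hh).
    assert (exists n, gv a n <> gv d n) as [n Hn].
    { destruct (Nat.eq_dec (a i) (x i)) as [E|E].
      - destruct (inj_main d a i Hd Ha) as [n Hn]; auto. congruence. exists n; auto.
      - apply (inj_main a d i); auto. }
    exists n. rewrite Eg, Eh. auto.
  - intros a Ha. exists (gv a). split. intros n; apply fval_phi; auto. apply gv_T2.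
Qed.
End Part2.

Theorem theorem6p6 :
  BCP -> AC10 -> AC01 ->
  models_sentence inT2 /\
  (forall beta : list nat -> nat,
     Spr beta -> models_sentence (inF beta) -> embeds beta inT2).
Proof.
  intros bcp ac10 _. split.
  - apply part1; auto.
  - intros beta HS [x [Hx [_ Hsent]]].
    destruct (ac10 (R beta HS x Hx) (R_total beta HS x Hx Hsent bcp)) as [psi [H1 H2]].
    exact (embeds_ok beta HS x Hx psi H1 H2).
Qed.
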